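(* Let $\hat\rho$ be a density operator on $L^2(\mathbb R)$ with bounded Fock support. Then there exists a unique $m\in\mathbb N$ such that $\hat\rho\in\mathcal D^m\setminus\mathcal D^{m-1}$ (with the convention $\mathcal D^{-1}=\emptyset$). Moreover, $\mathcal V_t[\hat\rho]/\mathrm{Tr}\,\mathcal V_t[\hat\rho]$ converges to $\frac1{2^m}\sum_{k=0}^m\binom mk|k\rangle\langle k|$ as $t\to\infty$.
   Context: Let $\hat a$ be the annihilation operator on $L^2(\mathbb R)$, $\hat n=\hat a^\dagger\hat a$, $\{|k\rangle\}$ the Fock basis, and $\hat P_N=\sum_{k=0}^N|k\rangle\langle k|$. $\mathcal D^N$ is the set of density operators $\hat\rho$ with $\hat P_N\hat\rho\hat P_N=\hat\rho$; a density operator has bounded Fock support if it lies in some $\mathcal D^N$. For $t>0$, the Vertigo map on such operators is $\mathcal V_t[\hat A]=\sum_{k\ge0}\frac{(t-1)^k}{k!}t^{\hat n/2}\hat a^k\hat A\hat a^{\dagger k}t^{\hat n/2}$ (finite sum), equivalently characterized on Wigner functions $W_{\hat A}(\alpha)=\frac2\pi\mathrm{Tr}[\hat A\hat D(\alpha)(-1)^{\hat n}\hat D(\alpha)^\dagger]$, $\hat D(\alpha)=\exp(\alpha\hat a^\dagger-\alpha^*\hat a)$, by $W_{\mathcal V_t[\hat A]}(\alpha)=W_{\hat A}(\sqrt t\alpha)e^{2(t-1)|\alpha|^2}$. *)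

(* Defs.v *)
From mathcomp Require Import all_boot all_order all_algebra.
From mathcomp Require Import complex.
From mathcomp Require Import all_classical all_reals all_analysis.
Import numFieldNormedType.Exports.
Set Implicit Arguments. Unset Strict Implicit. Unset Printing Implicit Defensive.
Import Order.TTheory GRing.Theory Num.Theory.
Local Open Scope ring_scope.
Local Open Scope classical_set_scope.

(* An operator A with bounded Fock support, A = P_N A P_N, is represented by
   its matrix (<i|A|j>)_{0 <= i,j <= N} in the Fock basis |0>,...,|N>,
   i.e. an element of 'M[R[i]]_(N.+1), standing for sum_{i,j} A i j |i><j|. *)

Section Fock.
Variable R : realType.
Variable N : nat.
Local Notation C := (R[i]).
Local Notation M := 'M[C]_(N.+1).

Definition adjoint m n (A : 'M[C]_(m, n)) : 'M[C]_(n, m) :=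
  \matrix_(i, j) (A j i)^*.

Definition is_density (A : M) : Prop :=
  (forall v : 'cV[C]_(N.+1), 0 <= (adjoint v *m A *m v) 0 0) /\ \tr A = 1.

Definition projP (m : nat) : M := \matrix_(i, j) (if (i == j) && (i <= m)%N then 1 else 0).

Definition inD (m : nat) (A : M) : Prop := is_density A /\ projP m *m A *m projP m = A.

Definition inDpred (m : nat) (A : M) : Prop :=
  if m is m'.+1 then inD m' A else False.

(* annihilation operator: a|j> = sqrt j |j-1>, i.e. <i|a|j> = sqrt j [i+1 = j].
   Restricted to span{|0..N>} it is exact since a lowers the Fock index;
   and for A = P_N A P_N, A a^dag^k = A P_N a^dag^k P_N, so the truncated
   products below coincide with the products on L^2(R). *)
Definition amat : M :=
  \matrix_(i, j) (if (i.+1 == j :> nat) then ((Num.sqrt (j%:R : R))%:C)%C else 0).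

Definition adag : M := adjoint amat.

(* t^(n/2) : |j> |-> t^(j/2) |j> *)
Definition tn (t : R) : M := \matrix_(i, j) (if i == j then ((Num.sqrt t ^+ i)%:C)%C else 0).

(* Vertigo map V_t[A] = sum_k (t-1)^k/k! t^(n/2) a^k A a^dag^k t^(n/2);
   terms with k > N vanish. *)
Definition vertigo (t : R) (A : M) : M :=
  \sum_(k < N.+1) ((((t - 1) ^+ k / (k`!)%:R)%:C)%C *:
                   (tn t *m (amat ^+ k) *m A *m (adag ^+ k) *m tn t)).

Definition binom_state (m : nat) : M :=
  \matrix_(i, j) (if (i == j) && (i <= m)%N
                  then (((('C(m, i))%:R / (2 ^+ m)) : R)%:C)%C else 0).

Definition mx_cvg_pinfty (F : R -> M) (L : M) : Prop :=
  forall i j,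
    (complex.Re (F t i j) @[t --> +oo] --> complex.Re (L i j)) /\
    (complex.Im (F t i j) @[t --> +oo] --> complex.Im (L i j)).

End Fock.

(* Main.v *)
Require Import Defs.
From mathcomp Require Import all_boot all_order all_algebra.
From mathcomp Require Import complex.
From mathcomp Require Import all_classical all_reals all_analysis.
From mathcomp Require Import zify ring lra.
Import Order.TTheory GRing.Theory Num.Theory.
Import numFieldNormedType.Exports.
Local Open Scope ring_scope.
Local Open Scope classical_set_scope.

Section Lim.
Variable R : realType.

Lemma near_cvg (f g : R -> R) (l : R) :
  (\forall t \near +oo, g t = f t) -> g @ +oo --> l -> f @ +oo --> l.
Proof. by move=> H Hg; apply: cvg_trans Hg; apply: near_eq_cvg. Qed.

Lemma near_pos : \forall t \near (+oo : set_system R), 0 < t.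
Proof. by apply: nbhs_pinfty_gt; rewrite num_real. Qed.

Lemma lim_inv : (fun t : R => t^-1) @ +oo --> (0:R).
Proof.
have := @gtr0_cvgV0 R R (nbhs +oo) _ (fun t => t).
move=> [].
  by near=> t; near: t; apply: nbhs_pinfty_gt; rewrite num_real.
move=> _ H; apply: H; exact: cvg_id.
Unshelve. all: by end_near. Qed.

Lemma lim_invsqrt : (fun t : R => (Num.sqrt t)^-1) @ +oo --> (0:R).
Proof.
apply: (@near_cvg _ (fun t : R => Num.sqrt (t^-1))).
  near=> t; rewrite sqrtrV //; apply: ltW; near: t; exact: near_pos.
have -> : (0:R) = Num.sqrt 0 by rewrite sqrtr0.
apply: (cvg_comp _ _ lim_inv); exact: sqrt_continuous.
Unshelve. all: by end_near. Qed.

Lemma lim_ratio : (fun t : R => (t - 1) / t) @ +oo --> (1:R).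
Proof.
apply: (@near_cvg _ (fun t : R => 1 - t^-1)).
  near=> t; have tp : 0 < t by near: t; exact: near_pos.
  by rewrite mulrBl divff ?mul1r // gt_eqF.
rewrite -[X in _ --> X]subr0; apply: cvgB; [exact: cvg_cst | exact: lim_inv].
Unshelve. all: by end_near. Qed.

Lemma lim_sum n (f : 'I_n -> R -> R) (l : 'I_n -> R) :
  (forall k, f k @ +oo --> l k) -> (fun t => \sum_(k < n) f k t) @ +oo --> \sum_(k < n) l k.
Proof.
move=> H; apply: cvg_big => //.
exact: add_continuous.
Qed.
End Lim.

Section L.
Variable R : realType.
Lemma lim_pow (f : R -> R) (a : R) n : f @ +oo --> a -> (fun t => f t ^+ n) @ +oo --> a ^+ n.
Proof.
move=> H; elim: n => [|n IH].
  rewrite expr0; under eq_cvg do rewrite expr0; exact: cvg_cst.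
rewrite exprS; under eq_cvg do rewrite exprS; exact: cvgM.
Qed.

Lemma term_id (t c : R) (i j k m : nat) : 0 < t -> (i + k <= m)%N -> (j + k <= m)%N ->
  (t - 1) ^+ k / (k`!)%:R * (Num.sqrt t ^+ i * Num.sqrt t ^+ j * c) / t ^+ m =
  ((t - 1) / t) ^+ k * ((k`!%:R)^-1 * c) * ((Num.sqrt t)^-1) ^+ (2 * m - (i + j + 2 * k))%N.
Proof.
move=> tp hi hj.
set e := (2 * m - (i + j + 2 * k))%N.
have he : (2 * m)%N = (i + j + 2 * k + e)%N by rewrite /e; lia.
have sp : 0 < Num.sqrt t by rewrite sqrtr_gt0.
have ts : t = Num.sqrt t ^+ 2 by rewrite sqr_sqrtr // ltW.
rewrite expr_div_n exprVn.
have -> : t ^+ m = Num.sqrt t ^+ i * Num.sqrt t ^+ j * Num.sqrt t ^+ (2 * k) * Num.sqrt t ^+ e.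
  by rewrite [in LHS]ts -exprM he !exprD.
have -> : t ^+ k = Num.sqrt t ^+ (2 * k) by rewrite [in LHS]ts -exprM.
have s0 : forall n, Num.sqrt t ^+ n != 0 by move=> n; rewrite expf_neq0 // gt_eqF.
have f0 : (k`!%:R : R) != 0 by rewrite pnatr_eq0 -lt0n fact_gt0.
field.
by rewrite f0 !s0.
Qed.
End L.

Section Mx.
Variable R : realType.
Variable N : nat.
Local Notation C := (R[i]).
Local Notation M := 'M[C]_(N.+1).

Lemma sum_if_eq (F : 'I_N.+1 -> C) (c : nat) :
  \sum_(l < N.+1) (if (l == c :> nat) then F l else 0) =
  if (c < N.+1)%N then F (inord c) else 0.
Proof.
case: ltnP => h.
  rewrite (bigD1 (inord c)) //= inordK // eqxx big1 ?addr0 // => l hl.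
  rewrite ifF //; apply/negbTE; apply: contra hl => /eqP e.
  by apply/eqP/val_inj; rewrite /= inordK.
apply: big1 => l _; rewrite ifF //; apply/negbTE.
by rewrite neq_ltn (leq_trans (ltn_ord l) h).
Qed.

Definition alpha (i k : nat) : R := \prod_(l < k) Num.sqrt ((i + l).+1%:R).

Lemma amatX k (i j : 'I_N.+1) :
  (amat R N ^+ k) i j = if ((i + k)%N == j :> nat) then (alpha i k)%:C%C else 0.
Proof.
elim: k i j => [|k IH] i j.
  rewrite expr0 !mxE addn0 /alpha big_ord0.
  by case: eqP => [->|/eqP h]; rewrite ?eqxx // ifF //; apply/negbTE; apply: contra h => /eqP/val_inj ->.
rewrite exprSr mxE.
transitivity (\sum_(l < N.+1) (if (l == (i + k)%N :> nat) then
   (alpha i k)%:C%C * (if ((i + k)%N.+1 == j :> nat) then (Num.sqrt (j%:R : R))%:C%C else 0) else 0)).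
  apply: eq_bigr => l _; rewrite IH mxE eq_sym.
  by case: eqP => [->|]; rewrite ?mul0r.
rewrite sum_if_eq; case: ltnP => h.
  rewrite addnS; case: eqP => [e|]; last by rewrite mulr0.
  rewrite /alpha big_ord_recr /= -e rmorphM /=. done.
rewrite ifF // addnS; apply/negbTE/eqP => e; have := ltn_ord j; rewrite -e; lia.
Qed.


Lemma adagE (i j : 'I_N.+1) :
  adag R N i j = if (j.+1 == i :> nat) then (Num.sqrt (i%:R : R))%:C%C else 0.
Proof.
rewrite /adag /adjoint !mxE; case: eqP => _ /=.
- by rewrite conj_Creal // complex_real.
- by rewrite conjC0.
Qed.

Lemma adagX k (i j : 'I_N.+1) :
  (adag R N ^+ k) i j = if ((j + k)%N == i :> nat) then (alpha j k)%:C%C else 0.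
Proof.
elim: k i j => [|k IH] i j.
  rewrite expr0 !mxE addn0 /alpha big_ord0.
  by case: eqP => [->|/eqP h]; rewrite ?eqxx // ifF //; apply/negbTE; apply: contra h => /eqP/val_inj ->.
rewrite exprS mxE.
transitivity (\sum_(l < N.+1) (if (l == (j + k)%N :> nat) then
   (alpha j k)%:C%C * (if ((j + k)%N.+1 == i :> nat) then (Num.sqrt (i%:R : R))%:C%C else 0) else 0)).
  apply: eq_bigr => l _; rewrite IH adagE; case: (eqVneq (l : nat) (j + k)%N) => [e|ne].
    by rewrite e mulrC.
  by rewrite mulr0.
rewrite sum_if_eq; case: ltnP => h.
  rewrite addnS; case: eqP => [e|]; last by rewrite mulr0.
  rewrite /alpha big_ord_recr /= -e rmorphM /=. done.
rewrite ifF // addnS; apply/negbTE/eqP => e; have := ltn_ord i; rewrite -e; lia.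
Qed.

Lemma tnE (t : R) (i j : 'I_N.+1) :
  tn N t i j = if i == j then ((Num.sqrt t) ^+ i)%:C%C else 0.
Proof. by rewrite mxE. Qed.

Lemma diag_sum (F : 'I_N.+1 -> C) (j : 'I_N.+1) :
  \sum_(l < N.+1) (if l == j then F l else 0) = F j.
Proof.
rewrite (bigD1 j) //= eqxx big1 ?addr0 // => l /negbTE -> //.
Qed.

Lemma tnL (t : R) (X : M) i j : (tn N t *m X) i j = ((Num.sqrt t) ^+ i)%:C%C * X i j.
Proof.
rewrite mxE (eq_bigr (fun l => if l == i then ((Num.sqrt t) ^+ i)%:C%C * X i j else 0)).
  by rewrite diag_sum.
by move=> l _; rewrite tnE eq_sym; case: eqP => [->|]; rewrite ?mul0r.
Qed.

Lemma tnR (t : R) (X : M) i j : (X *m tn N t) i j = X i j * ((Num.sqrt t) ^+ j)%:C%C.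
Proof.
rewrite mxE (eq_bigr (fun l => if l == j then X i j * ((Num.sqrt t) ^+ j)%:C%C else 0)).
  by rewrite diag_sum.
by move=> l _; rewrite tnE; case: eqP => [->|]; rewrite ?mulr0.
Qed.

Lemma aL k (X : M) (i j : 'I_N.+1) : (amat R N ^+ k *m X) i j =
  if ((i + k)%N < N.+1)%N then (alpha i k)%:C%C * X (inord (i + k)) j else 0.
Proof.
rewrite mxE -(sum_if_eq (fun l => (alpha i k)%:C%C * X l j)); apply: eq_bigr => l _; rewrite amatX eq_sym.
by case: ifP; rewrite ?mul0r.
Qed.

Lemma dR k (X : M) (i j : 'I_N.+1) : (X *m adag R N ^+ k) i j =
  if ((j + k)%N < N.+1)%N then X i (inord (j + k)) * (alpha j k)%:C%C else 0.
Proof.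
rewrite mxE -(sum_if_eq (fun l => X i l * (alpha j k)%:C%C)); apply: eq_bigr => l _; rewrite adagX eq_sym.
by case: ifP; rewrite ?mulr0.
Qed.

Definition rhon (A : M) (a b : nat) : C :=
  if (a < N.+1)%N && (b < N.+1)%N then A (inord a) (inord b) else 0.

Lemma termE (t : R) k (A : M) (i j : 'I_N.+1) :
  (tn N t *m (amat R N ^+ k) *m A *m (adag R N ^+ k) *m tn N t) i j =
  ((Num.sqrt t ^+ i * Num.sqrt t ^+ j * alpha i k * alpha j k)%:C%C) * rhon A (i + k) (j + k).
Proof.
rewrite tnR dR /rhon; case: (ltnP (j + k)%N N.+1) => hj; last first.
  by rewrite andbF !mul0r mulr0.
rewrite -mulmxA tnL aL andbT; case: ltnP => hi; last by rewrite !mulr0 !mul0r.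
rewrite !rmorphM /=; ring.
Qed.

Lemma vertigoE (t : R) (A : M) (i j : 'I_N.+1) :
  vertigo t A i j = \sum_(k < N.+1)
   (((t - 1) ^+ k / (k`!)%:R * (Num.sqrt t ^+ i * Num.sqrt t ^+ j * alpha i k * alpha j k))%:C%C
     * rhon A (i + k) (j + k)).
Proof.
rewrite /vertigo summxE; apply: eq_bigr => k _.
rewrite mxE termE !rmorphM /=; ring.
Qed.


Lemma sum_delta (F : 'I_N.+1 -> C) (a : 'I_N.+1) :
  \sum_(l < N.+1) F l * (l == a)%:R = F a.
Proof.
rewrite (bigD1 a) //= eqxx mulr1 big1 ?addr0 // => l /negbTE ->; exact: mulr0.
Qed.

Lemma sum2 (F : 'I_N.+1 -> C) (a b : 'I_N.+1) c1 c2 :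
  \sum_(l < N.+1) F l * (c1 * (l == a)%:R + c2 * (l == b)%:R) = F a * c1 + F b * c2.
Proof.
under eq_bigr do rewrite mulrDr.
rewrite big_split /=; congr (_ + _).
  rewrite -(sum_delta (fun l => F l * c1)); apply: eq_bigr => l _; ring.
rewrite -(sum_delta (fun l => F l * c2)); apply: eq_bigr => l _; ring.
Qed.

Definition vec2 (a b : 'I_N.+1) (c1 c2 : C) : 'cV[C]_(N.+1) :=
  \col_l (c1 * (l == a)%:R + c2 * (l == b)%:R).

Lemma quad2 (A : M) a b c1 c2 :
  (adjoint (vec2 a b c1 c2) *m A *m vec2 a b c1 c2) 0 0 =
  c1^* * c1 * A a a + c1^* * c2 * A a b + c2^* * c1 * A b a + c2^* * c2 * A b b.
Proof.
rewrite mxE.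
under eq_bigr do rewrite mxE.
have E : forall l : 'I_N.+1, \sum_j adjoint (R:=R) (vec2 a b c1 c2) 0 j * A j l =
   A a l * c1^* + A b l * c2^*.
  move=> l; rewrite -(sum2 (fun j => A j l)); apply: eq_bigr => l' _.
  by rewrite /adjoint /vec2 !mxE rmorphD !rmorphM /= !rmorph_nat mulrC.
under eq_bigr do rewrite E /vec2 mxE.
rewrite sum2; ring.
Qed.


Lemma psd2 (d x y : C) :
  (forall c : C, 0 <= d + c^* * y + c * x) -> x = 0.
Proof.
case: d => d1 d2; case: x => a b; case: y => c e => H.
have := H 0; have := H 1; have := H 'i%C.
rewrite !lecE /= => /andP[/eqP h1 _] /andP[/eqP h2 _] /andP[/eqP h3 h4].
have s0 : a ^+ 2 + b ^+ 2 = 0.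
  apply/eqP; apply/negP => /negP sn.
  have sp : 0 < a ^+ 2 + b ^+ 2.
    rewrite lt_def sn /=; nra.
  pose r := (d1 + 1) / (a ^+ 2 + b ^+ 2).
  have rs : r * (a ^+ 2 + b ^+ 2) = d1 + 1 by rewrite /r mulfVK // gt_eqF.
  have := H ((- r * a) +i* (r * b))%C; rewrite lecE /= => /andP[_ h5].
  have d20 : d2 = 0 by lra.
  have ca : c = a by lra.
  have eb : e = - b by lra.
  rewrite ca eb in h5; clearbody r.
  have h6 : 0 <= d1 - 2 * (r * (a ^+ 2 + b ^+ 2)).
    by move: h5; congr (_ <= _); ring.
  rewrite rs in h6; lra.
have a0 : a = 0 by nra.
have b0 : b = 0 by nra.
by rewrite a0 b0.
Qed.

Lemma diag_ge0 (A : M) : is_density A -> forall a, 0 <= A a a.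
Proof.
move=> [H _] a; have := H (vec2 a a 1 0); rewrite quad2 rmorph0 rmorph1.
by rewrite !(mul0r, mulr0, mul1r, addr0).
Qed.

Lemma psd_zero (A : M) (m : 'I_N.+1) : is_density A -> A m m = 0 ->
  forall j, A j m = 0 /\ A m j = 0.
Proof.
move=> [H _] Am j.
have K : forall c, 0 <= A j j + c^* * A m j + c * A j m.
  move=> c; have := H (vec2 j m 1 c); rewrite quad2 Am rmorph1; congr (0 <= _); ring.
split; first exact: (@psd2 _ _ _ K).
apply: (@psd2 (A j j) _ (A j m)) => c.
by have := K c^*; rewrite conjCK addrAC.
Qed.

Lemma projPE m (i j : 'I_N.+1) :
  projP R N m i j = if i == j then (if (i <= m)%N then 1 else 0) else 0.
Proof. by rewrite mxE; case: eqP. Qed.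

Lemma mulPl m (X : M) i j : (projP R N m *m X) i j = if (i <= m)%N then X i j else 0.
Proof.
rewrite [LHS]mxE (eq_bigr (fun l => if l == i then (if (i <= m)%N then X i j else 0) else 0)).
  by rewrite diag_sum.
move=> l _; rewrite projPE eq_sym; case: eqP => [->|]; last by rewrite mul0r.
by case: ifP; rewrite ?mul1r ?mul0r.
Qed.

Lemma mulPr m (X : M) i j : (X *m projP R N m) i j = if (j <= m)%N then X i j else 0.
Proof.
rewrite [LHS]mxE (eq_bigr (fun l => if l == j then (if (j <= m)%N then X i j else 0) else 0)).
  by rewrite diag_sum.
move=> l _; rewrite projPE; case: eqP => [->|]; last by rewrite mulr0.
by case: ifP; rewrite ?mulr1 ?mulr0.
Qed.

Lemma PAPE m (A : M) i j : (projP R N m *m A *m projP R N m) i j =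
  if (i <= m)%N && (j <= m)%N then A i j else 0.
Proof. by rewrite mulPr mulPl; case: (i <= m)%N; case: (j <= m)%N. Qed.

Definition supp m (A : M) := forall i j : 'I_N.+1, A i j != 0 -> (i <= m)%N && (j <= m)%N.

Lemma inD_supp m (A : M) : inD m A <-> is_density A /\ supp m A.
Proof.
split.
  move=> [D E]; split => // i j; have := PAPE m A i j; rewrite E => ->.
  by case: ifP => [hc _|_]; [reflexivity | rewrite eqxx].
move=> [D S]; split => //; apply/matrixP => i j; rewrite PAPE.
case: ifP => h; first reflexivity.
case: (A i j =P 0) => [->|/eqP ne]; first reflexivity.
have := S i j ne; rewrite h => hf; discriminate hf.
Qed.

Lemma supp_mono m m' (A : M) : (m <= m')%N -> supp m A -> supp m' A.
Proof. move=> le S i j /S /andP[hi hj]; by rewrite (leq_trans hi le) (leq_trans hj le). Qed.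

Lemma supp_N (A : M) : supp N A.
Proof. by move=> i j _; rewrite !leq_ord. Qed.

End Mx.

Section T.
Variable R : realType.

Lemma term_lim (c : R) (i j k m : nat) : (i + k <= m)%N -> (j + k <= m)%N ->
  (fun t : R => (t - 1) ^+ k / (k`!)%:R * (Num.sqrt t ^+ i * Num.sqrt t ^+ j * c) / t ^+ m)
  @ +oo --> (if ((i + k)%N == m) && ((j + k)%N == m) then (k`!%:R)^-1 * c else 0).
Proof.
move=> hi hj.
apply: (@near_cvg _ _ (fun t => ((t - 1) / t) ^+ k * ((k`!%:R)^-1 * c) *
   ((Num.sqrt t)^-1) ^+ (2 * m - (i + j + 2 * k))%N)).
  near=> t; rewrite term_id //; near: t; exact: near_pos.
have -> : (if ((i + k)%N == m) && ((j + k)%N == m) then (k`!%:R)^-1 * c else 0) =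
   1 ^+ k * ((k`!%:R)^-1 * c) * 0 ^+ (2 * m - (i + j + 2 * k))%N.
  rewrite expr1n mul1r expr0n.
  have -> : ((2 * m - (i + j + 2 * k))%N == 0%N) = ((i + k)%N == m) && ((j + k)%N == m).
    apply/eqP/andP; [move=> h; split; apply/eqP; lia | move=> [/eqP h1 /eqP h2]; lia].
  by case: ifP; rewrite ?mulr1 ?mulr0.
apply: cvgM; first apply: cvgM.
- exact: lim_pow (lim_ratio R).
- exact: cvg_cst.
- exact: lim_pow (lim_invsqrt R).
Unshelve. all: by end_near. Qed.


Local Notation C := (R[i]).

Lemma ReD (x y : C) : complex.Re (x + y) = complex.Re x + complex.Re y. Proof. by case: x => ? ?; case: y => ? ?. Qed.
Lemma ImD (x y : C) : complex.Im (x + y) = complex.Im x + complex.Im y. Proof. by case: x => ? ?; case: y => ? ?. Qed.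
Lemma Re0 : complex.Re (0 : C) = 0. Proof. by []. Qed.
Lemma Im0 : complex.Im (0 : C) = 0. Proof. by []. Qed.
Lemma Re_sum n (F : 'I_n -> C) : complex.Re (\sum_(k < n) F k) = \sum_(k < n) complex.Re (F k).
Proof. exact: (big_morph _ ReD Re0). Qed.
Lemma Im_sum n (F : 'I_n -> C) : complex.Im (\sum_(k < n) F k) = \sum_(k < n) complex.Im (F k).
Proof. exact: (big_morph _ ImD Im0). Qed.
Lemma ReMr (r : R) (z : C) : complex.Re (r%:C%C * z) = r * complex.Re z.
Proof. case: z => a b /=; ring. Qed.
Lemma ImMr (r : R) (z : C) : complex.Im (r%:C%C * z) = r * complex.Im z.
Proof. case: z => a b /=; ring. Qed.
Lemma Re_inv (z w : C) : complex.Im z = 0 -> complex.Re (z^-1 * w) = (complex.Re z)^-1 * complex.Re w.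
Proof. by case: z => a b /= ->; rewrite complexr0 -fmorphV ReMr. Qed.
Lemma Im_inv (z w : C) : complex.Im z = 0 -> complex.Im (z^-1 * w) = (complex.Re z)^-1 * complex.Im w.
Proof. by case: z => a b /= ->; rewrite complexr0 -fmorphV ImMr. Qed.

Variable N : nat.
Local Notation M := 'M[C]_(N.+1).

Definition Lre (A : M) m (i j : nat) : R := \sum_(k < N.+1)
  (if ((i + k)%N == m) && ((j + k)%N == m) then (k`!%:R)^-1 * (alpha R i k * alpha R j k) else 0)
    * complex.Re (rhon R N A (i + k) (j + k)).
Definition Lim (A : M) m (i j : nat) : R := \sum_(k < N.+1)
  (if ((i + k)%N == m) && ((j + k)%N == m) then (k`!%:R)^-1 * (alpha R i k * alpha R j k) else 0)
    * complex.Im (rhon R N A (i + k) (j + k)).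

Lemma rhon_supp (A : M) m a b (S : supp R N m A) : rhon R N A a b != 0 -> (a <= m)%N && (b <= m)%N.
Proof.
rewrite /rhon; case: ifP => [/andP[ha hb]|]; last by rewrite eqxx.
by move/S; rewrite !inordK.
Qed.

Lemma ReV_lim (A : M) m (i j : 'I_N.+1) : supp R N m A ->
  (fun t => complex.Re (vertigo t A i j) / t ^+ m) @ +oo --> Lre A m i j.
Proof.
move=> S.
under eq_cvg do rewrite vertigoE Re_sum mulr_suml.
apply: lim_sum => k.
case: (eqVneq (rhon R N A (i + k) (j + k)) 0) => [E0|nz].
  set L := (X in _ --> X).
  have -> : L = 0 by rewrite /L E0 Re0 mulr0.
  apply: (@near_cvg _ _ (fun _ => 0)); last exact: cvg_cst.
  by near=> t; rewrite ReMr E0 Re0 mulr0 mul0r.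
have /andP[hi hj] := rhon_supp _ _ _ _ S nz.
apply: (@near_cvg _ _ (fun t : R => (t - 1) ^+ k / (k`!)%:R * (Num.sqrt t ^+ i * Num.sqrt t ^+ j * (alpha R i k * alpha R j k)) / t ^+ m *
   complex.Re (rhon R N A (i + k) (j + k)))).
  by near=> t; rewrite ReMr !mulrA mulrAC.
apply: cvgM; [exact: term_lim | exact: cvg_cst].
Unshelve. all: by end_near. Qed.

Lemma ImV_lim (A : M) m (i j : 'I_N.+1) : supp R N m A ->
  (fun t => complex.Im (vertigo t A i j) / t ^+ m) @ +oo --> Lim A m i j.
Proof.
move=> S.
under eq_cvg do rewrite vertigoE Im_sum mulr_suml.
apply: lim_sum => k.
case: (eqVneq (rhon R N A (i + k) (j + k)) 0) => [E0|nz].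
  set L := (X in _ --> X).
  have -> : L = 0 by rewrite /L E0 Im0 mulr0.
  apply: (@near_cvg _ _ (fun _ => 0)); last exact: cvg_cst.
  by near=> t; rewrite ImMr E0 Im0 mulr0 mul0r.
have /andP[hi hj] := rhon_supp _ _ _ _ S nz.
apply: (@near_cvg _ _ (fun t : R => (t - 1) ^+ k / (k`!)%:R * (Num.sqrt t ^+ i * Num.sqrt t ^+ j * (alpha R i k * alpha R j k)) / t ^+ m *
   complex.Im (rhon R N A (i + k) (j + k)))).
  by near=> t; rewrite ImMr !mulrA mulrAC.
apply: cvgM; [exact: term_lim | exact: cvg_cst].
Unshelve. all: by end_near. Qed.


Lemma sum_if_eqR (F : 'I_N.+1 -> R) (c : nat) :
  \sum_(l < N.+1) (if (l == c :> nat) then F l else 0) =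
  if (c < N.+1)%N then F (inord c) else 0.
Proof.
case: ltnP => h.
  rewrite (bigD1 (inord c)) //= inordK // eqxx big1 ?addr0 // => l hl.
  rewrite ifF //; apply/negbTE; apply: contra hl => /eqP e.
  by apply/eqP/val_inj; rewrite /= inordK.
apply: big1 => l _; rewrite ifF //; apply/negbTE/eqP => e; have := ltn_ord l; lia.
Qed.

Lemma prod_fact i k : (i`! * \prod_(l < k) (i + l).+1 = (i + k)`!)%N.
Proof.
elim: k => [|k IH]; first by rewrite big_ord0 muln1 addn0.
by rewrite big_ord_recr /= mulnA IH addnS factS mulnC.
Qed.

Lemma alpha_sq i k : alpha R i k * alpha R i k = ((\prod_(l < k) (i + l).+1)%N)%:R.
Proof.
rewrite /alpha -big_split /= natr_prod; apply: eq_bigr => l _.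
by rewrite -expr2 sqr_sqrtr // ler0n.
Qed.

Lemma Lcoef i m : (i <= m)%N ->
  ((m - i)`!%:R)^-1 * (alpha R i (m - i) * alpha R i (m - i)) = ('C(m, i))%:R :> R.
Proof.
move=> hi; rewrite alpha_sq.
have E : (\prod_(l < m - i) (i + l).+1 = 'C(m, i) * (m - i)`!)%N.
  apply/eqP; rewrite -(eqn_pmul2l (fact_gt0 i)); apply/eqP.
  rewrite prod_fact subnKC // -(bin_fact hi); ring.
have f0 : ((m - i)`!%:R : R) != 0 by rewrite pnatr_eq0 -lt0n fact_gt0.
by rewrite E natrM mulrC mulfK.
Qed.

Lemma Lre_eq (A : M) m (i j : nat) : (m < N.+1)%N ->
  Lre A m i j = if (i == j) && (i <= m)%N then ('C(m, i))%:R * complex.Re (A (inord m) (inord m)) else 0.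
Proof.
move=> hm; rewrite /Lre; case: ifP => [/andP[/eqP <- him]|hc].
  rewrite (eq_bigr (fun k : 'I_N.+1 => if (k == (m - i)%N :> nat) then
     ((k`!%:R)^-1 * (alpha R i k * alpha R i k)) * complex.Re (rhon R N A (i + k) (i + k)) else 0)).
    rewrite sum_if_eqR ifT; last by have := leq_subr i m; lia.
    rewrite inordK; last by have := leq_subr i m; lia.
    rewrite Lcoef // subnKC // /rhon hm; by [].
  move=> k _; rewrite andbb; case: (eqVneq (k : nat) (m - i)%N) => [->|ne].
    by rewrite subnKC // eqxx.
  by rewrite ifF ?mul0r //; apply/negbTE/eqP => e; apply/eqP: ne; lia.
apply: big1 => k _; rewrite ifF ?mul0r //; apply/negbTE/negP => /andP[/eqP e1 /eqP e2].
move: hc; have -> : i = j by lia.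
by rewrite eqxx /=; have -> : (j <= m)%N by lia.
Qed.

Lemma Lim_eq (A : M) m (i j : nat) : (forall a, complex.Im (A a a) = 0) -> Lim A m i j = 0.
Proof.
move=> Hd; rewrite /Lim; apply: big1 => k _; case: ifP => [/andP[/eqP e1 /eqP e2]|]; last by rewrite mul0r.
rewrite e1 e2 /rhon; case: ifP => _; by rewrite ?Hd ?Im0 mulr0.
Qed.

Lemma sum_bin m : (m < N.+1)%N -> \sum_(i < N.+1) ('C(m, i))%:R = (2 ^+ m : R).
Proof.
move=> hm; rewrite -natr_sum.
have -> : (\sum_(i < N.+1) 'C(m, i) = \sum_(i < m.+1) 'C(m, i))%N.
  rewrite (big_ord_widen N.+1 (fun i => 'C(m, i)) hm) [RHS]big_mkcond /=.
  by apply: eq_bigr => i _; case: ltnP => // h; rewrite bin_small.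
have := expnDn 1 1 m; rewrite (eq_bigr (fun i : 'I_m.+1 => 'C(m, i))) => [<-|i _]; last by rewrite !exp1n !muln1.
by rewrite natrX.
Qed.

End T.

Theorem lemma12 (R : realType) (N : nat) (rho : 'M[R[i]]_(N.+1)) :
  is_density rho ->
  (exists! m : nat, inD m rho /\ ~ inDpred m rho) /\
  (forall m : nat, inD m rho -> ~ inDpred m rho ->
     mx_cvg_pinfty
       (fun t : R => (\tr (vertigo t rho))^-1 *: vertigo t rho)
       (@binom_state R N m)).
Proof.
move=> D.
pose P := fun m => [forall i : 'I_N.+1, forall j : 'I_N.+1, (rho i j != 0) ==> ((i <= m)%N && (j <= m)%N)].
have PS : forall m, reflect (supp R N m rho) (P m).
  move=> m; apply: (iffP idP).
    move=> /forallP H i j nz; have := forallP (H i) j; rewrite nz; exact.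
  move=> S; apply/forallP => i; apply/forallP => j; apply/implyP; exact: S.
have exP : exists m, P m by exists N; apply/PS; exact: supp_N.
split.
  case: (ex_minnP exP) => m0 Pm0 minm0.
  exists m0; split.
    split; first by apply/inD_supp; split => //; apply/PS.
    case: m0 Pm0 minm0 => [|m'] Pm0 minm0; first by [].
    rewrite /inDpred => /inD_supp [_ /PS Pm'].
    by have := minm0 _ Pm'; lia.
  move=> y [/inD_supp [_ Sy] ny].
  have le := minm0 _ (introT (PS y) Sy).
  case: (ltnP m0 y) => h; last lia.
  exfalso; apply: ny; case: y Sy le h => [|y'] Sy le h; first lia.
  apply/inD_supp; split => //; apply: (supp_mono _ _ m0); first lia.
  exact/PS.
move=> m /inD_supp [_ S] nd.
have hmN : (m < N.+1)%N.
  case: (ltnP m N.+1) => // h; exfalso; apply: nd.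
  case: m S h => [|m'] S h; first lia.
  apply/inD_supp; split => //; apply: (supp_mono _ _ N); [lia | exact: supp_N].
pose mo : 'I_N.+1 := inord m.
have moE : (mo : nat) = m by rewrite /mo inordK.
have Hd : forall a, complex.Im (rho a a) = 0 /\ 0 <= complex.Re (rho a a).
  move=> a; move: (@diag_ge0 R N rho D a); rewrite lecE => /andP[/eqP h1 h2]; split => //.
have nz : rho mo mo != 0.
  apply/eqP => Z.
  have Zr := @psd_zero R N rho mo D Z.
  have Q : forall i j, rho i j != 0 -> ((i < m)%N && (j < m)%N).
    move=> i j nzij; have /andP[hi hj] := S i j nzij.
    rewrite !ltn_neqAle hi hj !andbT; apply/andP; split; apply/eqP => e.
      have ei : i = mo by apply: val_inj => /=; rewrite moE.
      by move: nzij; rewrite ei (proj2 (Zr j)) eqxx.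
    have ej : j = mo by apply: val_inj => /=; rewrite moE.
    by move: nzij; rewrite ej (proj1 (Zr i)) eqxx.
  case: m S nd hmN mo moE Z Zr Q => [|m'] S nd hmN mo moE Z Zr Q.
    move: D => [_]; rewrite /mxtrace big1 => [/esym/eqP|i _]; first by rewrite oner_eq0.
    by case: (rho i i =P 0) => // /eqP /Q.
  apply: nd; apply/inD_supp; split => // i j /Q /andP[hi hj].
set p := complex.Re (rho mo mo).
have pp : 0 < p.
  rewrite lt_def (proj2 (Hd mo)) andbT; apply: contra nz => /eqP p0.
  by apply/eqP; move: (proj1 (Hd mo)); rewrite /p in p0; case: (rho mo mo) p0 => a b /= -> ->.
have rhonIm : forall a, complex.Im (rhon R N rho a a) = 0.
  by move=> a; rewrite /rhon; case: ifP => _; [exact: (proj1 (Hd _)) | exact: Im0].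
have ImT : forall t, complex.Im (\tr (vertigo t rho)) = 0.
  move=> t; rewrite /mxtrace Im_sum big1 // => a _.
  rewrite vertigoE Im_sum big1 // => k _; move: (rhonIm (a + k)%N); case: (rhon R N rho (a + k)%N (a + k)%N) => x y /= ->; ring.
have ReT : forall t, complex.Re (\tr (vertigo t rho)) = \sum_(a < N.+1) complex.Re (vertigo t rho a a).
  by move=> t; rewrite /mxtrace Re_sum.
have LreE : forall i j : 'I_N.+1, Lre R N rho m i j =
    if (i == j) && (i <= m)%N then ('C(m, i))%:R * p else 0.
  move=> i j; rewrite Lre_eq // -/mo.
have sumL : \sum_(a < N.+1) Lre R N rho m a a = p * 2 ^+ m.
  rewrite -(sum_bin R N m hmN) mulr_sumr; apply: eq_bigr => a _.
  rewrite LreE eqxx /=; case: leqP => h; first by rewrite mulrC.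
  by rewrite bin_small // mulr0.
have sumL0 : \sum_(a < N.+1) Lre R N rho m a a != 0.
  by rewrite sumL mulf_neq0 ?gt_eqF //; apply: expf_neq0; rewrite pnatr_eq0.
have Tlim : (fun t : R => \sum_(a < N.+1) (complex.Re (vertigo t rho a a) / t ^+ m)) @ +oo -->
   \sum_(a < N.+1) Lre R N rho m a a.
  by apply: lim_sum => a; apply: ReV_lim.
have idt : forall x y z : R, y != 0 -> (x / y)^-1 * (z / y) = x^-1 * z.
  move=> x y z y0; have [->|x0] := eqVneq x 0; first by rewrite !(mul0r, invr0).
  by field; rewrite x0 y0.
move=> i j; split.
  apply: (@near_cvg _ _ (fun t : R => (\sum_(a < N.+1) (complex.Re (vertigo t rho a a) / t ^+ m))^-1 *
      (complex.Re (vertigo t rho i j) / t ^+ m))).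
    near=> t; rewrite mxE Re_inv ?ImT // ReT -mulr_suml idt //.
    apply: expf_neq0; rewrite gt_eqF //; near: t; exact: near_pos.
  have -> : complex.Re (binom_state R N m i j) = (\sum_(a < N.+1) Lre R N rho m a a)^-1 * Lre R N rho m i j.
    rewrite sumL LreE mxE; case: ifP => _ /=; last by rewrite mulr0.
    have e2 : (2 ^+ m : R) != 0 by apply: expf_neq0; rewrite pnatr_eq0.
    field; apply/andP; split; [exact: e2 | by move: pp; rewrite lt0r => /andP[]].
  apply: cvgM; [exact: cvgV | exact: ReV_lim].
apply: (@near_cvg _ _ (fun t : R => (\sum_(a < N.+1) (complex.Re (vertigo t rho a a) / t ^+ m))^-1 *
    (complex.Im (vertigo t rho i j) / t ^+ m))).
  near=> t; rewrite mxE Im_inv ?ImT // ReT -mulr_suml idt //.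
  apply: expf_neq0; rewrite gt_eqF //; near: t; exact: near_pos.
have -> : complex.Im (binom_state R N m i j) = (\sum_(a < N.+1) Lre R N rho m a a)^-1 * Lim R N rho m i j.
  rewrite Lim_eq; last by move=> a; exact: (proj1 (Hd a)).
  by rewrite mulr0 mxE; case: ifP.
apply: cvgM; [exact: cvgV | exact: ImV_lim].
Unshelve. all: by end_near. Qed.
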